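(* If $Q$ is a Jordan loop of order $9$ which is cyclic (i.e. $Q=\langle x\rangle$ for some $x\in Q$), then $Q$ is a group.
   Context: A loop is a set $Q$ with a binary operation (juxtaposition) and neutral element $e$ such that for all $a,b$ the equations $ax=b$, $ya=b$ have unique solutions. A Jordan loop is a commutative loop satisfying $x^2(yx)=(x^2y)x$. $\langle x\rangle$ denotes the subloop generated by $x$ (the smallest subloop containing $x$). *)

(* Defs.v *)
From mathcomp Require Import all_boot.
Set Implicit Arguments. Unset Strict Implicit. Unset Printing Implicit Defensive.

Definition is_loop (T : finType) (mul : T -> T -> T) (e : T) : Prop :=
  (forall x, mul e x = x /\ mul x e = x) /\
  (forall a b, exists! x, mul a x = b) /\
  (forall a b, exists! y, mul y a = b).

Definition is_jordan_loop (T : finType) (mul : T -> T -> T) (e : T) : Prop :=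
  is_loop mul e /\
  (forall x y, mul x y = mul y x) /\
  (forall x y, mul (mul x x) (mul y x) = mul (mul (mul x x) y) x).

(* S is a subloop: contains e, closed under multiplication and under both
   divisions (the unique solutions of a x = b and y a = b with a, b in S
   lie in S). *)
Definition is_subloop (T : finType) (mul : T -> T -> T) (e : T) (S : {set T}) : Prop :=
  e \in S /\
  (forall a b, a \in S -> b \in S -> mul a b \in S) /\
  (forall a x, a \in S -> mul a x \in S -> x \in S) /\
  (forall a y, a \in S -> mul y a \in S -> y \in S).

Definition in_gen_subloop (T : finType) (mul : T -> T -> T) (e : T) (x z : T) : Prop :=
  forall S : {set T}, is_subloop mul e S -> x \in S -> z \in S.

Definition generates (T : finType) (mul : T -> T -> T) (e : T) (x : T) : Prop :=
  forall z : T, in_gen_subloop mul e x z.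

Definition is_group_op (T : finType) (mul : T -> T -> T) : Prop :=
  forall x y z, mul x (mul y z) = mul (mul x y) z.

(* Main.v *)
Require Import Defs.
From mathcomp Require Import all_boot.
Set Implicit Arguments. Unset Strict Implicit. Unset Printing Implicit Defensive.

Definition tbl := seq (seq (option nat)).
Definition get (P:tbl) a b : option nat := nth None (nth [::] P a) b.
Definition upd (P:tbl) a b v : tbl :=
  let P1 := set_nth [::] P a (set_nth None (nth [::] P a) b (Some v)) in
  set_nth [::] P1 b (set_nth None (nth [::] P1 b) a (Some v)).
Definition oeq (o : option nat) v := if o is Some w then eqn w v else false.
Definition used P a b := [seq get P a c | c <- iota 0 9 & c != b] ++ [seq get P b c | c <- iota 0 9 & c != a].
Definition dom P a b := [seq v <- iota 0 9 | ~~ has (fun o => oeq o v) (used P a b)].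
Definition cells := [seq c <- [seq (a,b) | a <- iota 0 9, b <- iota 0 9] | c.1 <= c.2].
Definition masks (P : tbl) := [seq [seq has (fun o => oeq o v) row | v <- iota 0 9] | row <- P].
Definition score (M : seq (seq bool)) a b :=
  count (fun p : bool * bool => ~~ p.1 && ~~ p.2) (zip (nth [::] M a) (nth [::] M b)).
Fixpoint pickr P M (cs : seq (nat*nat)) (best : option ((nat*nat)*nat)) :=
  match cs with [::] => best
  | c :: cs' => if get P c.1 c.2 is None then
       let s := score M c.1 c.2 in
       pickr P M cs' (match best with None => Some (c, s)
                   | Some (_, s') => if s < s' then Some (c, s) else best end)
     else pickr P M cs' best end.
Definition pick P : option (nat*nat) :=
  if pickr P (masks P) cells None is Some (c, _) then Some c else None.
Definition jordan_ok P := all (fun a => all (fun y =>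
  match get P a a with
  | Some aa => match get P y a, get P aa y with
     | Some ya, Some ay => match get P aa ya, get P ay a with
        | Some l, Some r => eqn l r | _, _ => true end
     | _, _ => true end
  | None => true end) (iota 0 9)) (iota 0 9).
Definition leaf P := all (fun a => all (fun b => all (fun c =>
  match get P b c, get P a b with
  | Some bc, Some ab => match get P a bc, get P ab c with
       | Some l, Some r => eqn l r | _, _ => false end
  | _, _ => false end) (iota 0 9)) (iota 0 9)) (iota 0 9).
Definition force_at P a y : option (nat * nat * nat) :=
  match get P a a with
  | Some aa => match get P y a, get P aa y with
     | Some ya, Some ay => match get P aa ya, get P ay a with
        | Some l, None => Some (ay, a, l)
        | None, Some r => Some (aa, ya, r)
        | _, _ => None end
     | _, _ => None end
  | None => None end.
Fixpoint findo (A B : Type) (f : A -> option B) (s : seq A) : option B :=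
  match s with [::] => None | x :: s' => if f x is Some b then Some b else findo f s' end.
Definition allpairs9 := [seq (a,y) | a <- iota 0 9, y <- iota 0 9].
Definition force P := findo (fun p : nat * nat => force_at P p.1 p.2) allpairs9.
Fixpoint solve fuel P : bool :=
  match fuel with 0 => false | S f =>
  if jordan_ok P then
    match force P with
    | Some (c, d, v) => if (c < 9) && (d < 9) && (v \in dom P c d) then solve f (upd P c d v) else true
    | None =>
    match pick P with None => leaf P
    | Some (a, b) => all (fun v => solve f (upd P a b v)) (dom P a b) end end
  else true end.
Definition P0 : tbl := [seq [seq (if i == 0 then Some j else if j == 0 then Some i
   else if (i == 1) && (j == 1) then Some 2 else if ((i == 1) && (j == 2)) || ((i == 2) && (j == 1)) then Some 3 else None)
   | j <- iota 0 9] | i <- iota 0 9].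

Section Sound.
Variable t : nat -> nat -> nat.
Definition valid :=
  [/\ forall a b, a < 9 -> b < 9 -> t a b < 9,
      forall a b, a < 9 -> b < 9 -> t a b = t b a,
      forall a b c, a < 9 -> b < 9 -> c < 9 -> t a b = t a c -> b = c &
      forall a y, a < 9 -> y < 9 -> t (t a a) (t y a) = t (t (t a a) y) a].
Definition agrees P := forall a b v, get P a b = Some v -> [/\ a < 9, b < 9 & t a b = v].

Lemma get_setP P a b v i j :
  get (upd P a b v) i j =
  if (i == b) && (j == a) then Some v else if (i == a) && (j == b) then Some v else get P i j.
Proof.
rewrite /get /upd.
rewrite !nth_set_nth /=.
case: (i =P b) => [->|ib]; case: (j =P a) => [->|ja]; case: (b =P a) => [ba|ba];
 case: (i =P a) => [ia|ia]; case: (j =P b) => [jb|jb]; subst => /=;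
 rewrite ?nth_set_nth /= ?eqxx //=; 
 repeat (case: eqP => //=; try congruence); try congruence.
all: try move=> ?; rewrite nth_set_nth /=; case: eqP => //; congruence.
Qed.

Hypothesis tv : valid.

Lemma jordan_sound P : agrees P -> jordan_ok P.
Proof.
case: tv => _ _ _ tJ hP.
apply/allP => a _; apply/allP => y _.
case Haa: (get P a a) => [aa|] //.
case Hya: (get P y a) => [ya|] //; case Hay: (get P aa y) => [ay|] //.
case Hl: (get P aa ya) => [l|] //; case Hr: (get P ay a) => [r|] //.
case: (hP _ _ _ Haa) => a9 _ E1; case: (hP _ _ _ Hya) => y9 _ E2.
case: (hP _ _ _ Hay) => _ _ E3; case: (hP _ _ _ Hl) => _ _ E4.
case: (hP _ _ _ Hr) => _ _ E5.
apply/eqnP; rewrite -E4 -E5 -E3 -E2 -E1; exact: tJ.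
Qed.

Lemma leaf_sound P : agrees P -> leaf P ->
  forall a b c, a < 9 -> b < 9 -> c < 9 -> t a (t b c) = t (t a b) c.
Proof.
move=> hP /allP H a b c a9 b9 c9.
have := H a; rewrite mem_iota a9 => /(_ isT) /allP H1.
have := H1 b; rewrite mem_iota b9 => /(_ isT) /allP H2.
have := H2 c; rewrite mem_iota c9 => /(_ isT).
case Hbc: (get P b c) => [bc|] //; case Hab: (get P a b) => [ab|] //.
case Hl: (get P a bc) => [l|] //; case Hr: (get P ab c) => [r|] // /eqnP lr.
case: (hP _ _ _ Hbc) => _ _ E1; case: (hP _ _ _ Hab) => _ _ E2.
case: (hP _ _ _ Hl) => _ _ E3; case: (hP _ _ _ Hr) => _ _ E4.
by rewrite E1 E2 E3 E4.
Qed.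

Definition okc (c : nat * nat) := (c.1 < 9) && (c.2 < 9).

Lemma pickr_ok P M cs best c s : all okc cs ->
  (forall c' s', best = Some (c', s') -> okc c') ->
  pickr P M cs best = Some (c, s) -> okc c.
Proof.
elim: cs best => [|c0 cs IH] best /=; first by move=> _ Hb /Hb.
case/andP=> ok0 okcs Hb.
case: (get P c0.1 c0.2) => [_|]; first exact: IH.
apply: IH => // c' s'.
case: best Hb => [[c1 s1]|] Hb.
  case: ifP => _; first by case=> <-.
  exact: Hb.
by case=> <-.
Qed.

Lemma pick_ok P a b : pick P = Some (a, b) -> a < 9 /\ b < 9.
Proof.
rewrite /pick.
case E: (pickr P (masks P) cells None) => [[c s]|] // [cE].
have : okc c.
  apply: (pickr_ok _ _ E) => //.
by rewrite cE => /andP.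
Qed.

Lemma dom_mem P a b : agrees P -> a < 9 -> b < 9 -> t a b \in dom P a b.
Proof.
case: tv => t9 tC tL _ hP a9 b9.
rewrite /dom mem_filter mem_iota t9 // andbT.
rewrite leq0n andbT.
apply/hasPn => o; rewrite mem_cat => /orP[] /mapP[c]; rewrite mem_filter => /andP[cb ci] ->;
  rewrite /oeq; case E: (get P _ c) => [w|] //; apply/negP => /eqnP wE.
  case: (hP _ _ _ E) => _ c9 E2.
  by move: cb; rewrite (tL a c b) ?eqxx // E2.
case: (hP _ _ _ E) => _ c9 E2.
by move: cb; rewrite (tL b c a) ?eqxx // E2 wE tC.
Qed.

Lemma agrees_set P a b : agrees P -> a < 9 -> b < 9 -> agrees (upd P a b (t a b)).
Proof.
case: tv => _ tC _ _ hP a9 b9 i j w; rewrite get_setP.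
case: ifP => [/andP[/eqP-> /eqP->] [<-]|_]; first by rewrite tC.
case: ifP => [/andP[/eqP-> /eqP->] [<-]|_] //.
exact: hP.
Qed.

Lemma findo_some (A B : Type) (f : A -> option B) s b :
  findo f s = Some b -> exists x, f x = Some b.
Proof. elim: s => [|x s IH] //=; case E: (f x) => [b'|]; [case=> <-; by exists x | exact: IH]. Qed.

Lemma force_sound P c d v : agrees P -> force P = Some (c, d, v) ->
  [/\ c < 9, d < 9 & t c d = v].
Proof.
case: tv => t9 _ _ tJ hP Hf; case: (findo_some Hf) => -[a y] /=; rewrite /force_at.
case Haa: (get P a a) => [aa|] //.
case Hya: (get P y a) => [ya|] //; case Hay: (get P aa y) => [ay|] //.
case: (hP _ _ _ Haa) => a9 _ E1; case: (hP _ _ _ Hya) => y9 _ E2.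
case: (hP _ _ _ Hay) => aa9 _ E3.
have J := tJ a y a9 y9; rewrite E1 E2 E3 in J.
case Hl: (get P aa ya) => [l|]; case Hr: (get P ay a) => [r|] //.
  case=> <- <- <-; case: (hP _ _ _ Hl) => _ _ E4.
  by split => //; [rewrite -E3 t9 | rewrite -J].
case=> <- <- <-; case: (hP _ _ _ Hr) => _ _ E4.
by split => //; [rewrite -E2 t9 | rewrite J].
Qed.

Lemma solve_sound fuel P : agrees P -> solve fuel P ->
  forall a b c, a < 9 -> b < 9 -> c < 9 -> t a (t b c) = t (t a b) c.
Proof.
elim: fuel P => [|f IH] P hP //=.
rewrite (jordan_sound hP).
case Hf: (force P) => [[[c d] v]|].
  case: (force_sound hP Hf) => c9 d9 tv'.
  rewrite c9 d9 -tv' (dom_mem hP c9 d9) /= => H.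
  by apply: (IH (upd P c d (t c d))) => //; apply: agrees_set.
case Hp: (pick P) => [[a b]|]; last exact: leaf_sound.
case: (pick_ok Hp) => a9 b9 /allP H.
apply: (IH (upd P a b (t a b))); first exact: agrees_set.
by apply: H; apply: dom_mem.
Qed.
End Sound.
Lemma agrees_P0 (t : nat -> nat -> nat) : valid t ->
  (forall j, j < 9 -> t 0 j = j) -> t 1 1 = 2 -> t 1 2 = 3 -> agrees t P0.
Proof.
case=> t9 tC _ _ h0 h11 h12 a b v.
have sP0 : size P0 = 9 by [].
rewrite /get.
case: (ltnP a 9) => a9; last by rewrite (nth_default [::] (s:=P0)) ?sP0 // nth_nil.
rewrite /P0 (nth_map 0) ?size_iota // nth_iota // add0n.
case: (ltnP b 9) => b9; last by rewrite nth_default // size_map size_iota.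
rewrite (nth_map 0) ?size_iota // nth_iota // add0n.
case: (a =P 0) => [-> [<-]|a0]; first by rewrite h0.
case: (b =P 0) => [-> [<-]|b0]; first by rewrite tC // h0.
case: (a =P 1) => [->|a1] /=.
  case: (b =P 1) => [-> [<-]|b1] //=.
  by case: (b =P 2) => [-> [<-]|b2] //=.
case: (a =P 2) => [->|a2] //=.
by case: (b =P 1) => [-> [<-]|b1] //=; rewrite tC.
Qed.
Section Loop.
Variables (T : finType) (mul : T -> T -> T) (e : T).
Hypothesis hJ : is_jordan_loop mul e.

Lemma mul1 z : mul e z = z. Proof. by case: hJ => [[H _] _] ; case: (H z). Qed.
Lemma mulC a b : mul a b = mul b a. Proof. by case: hJ => _ [H _]. Qed.
Lemma mulJ a y : mul (mul a a) (mul y a) = mul (mul (mul a a) y) a.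
Proof. by case: hJ => _ [_ H]. Qed.
Lemma mulI a : injective (mul a).
Proof.
move=> y1 y2 E; case: hJ => [[_ [H _]] _].
case: (H a (mul a y1)) => z [_ U].
by rewrite -(U y1 erefl) (U y2 (esym E)).
Qed.
Lemma mul0 z : mul z e = z. Proof. by rewrite mulC mul1. Qed.

Lemma div_closed (S : {set T}) a z : (forall s, s \in S -> mul a s \in S) ->
  mul a z \in S -> z \in S.
Proof.
move=> HS Hz.
have sub : [set mul a s | s in S] \subset S.
  by apply/subsetP => w /imsetP[s sS ->]; apply: HS.
have eqS : [set mul a s | s in S] = S.
  have inj : injective (mul a) by move=> y1 y2; exact: mulI.
  by apply/eqP; rewrite eqEcard sub card_imset // leqnn.
by move: Hz; rewrite -{1}eqS => /imsetP[s sS /mulI ->].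
Qed.

Lemma subloop_of (S : {set T}) : e \in S ->
  (forall a b, a \in S -> b \in S -> mul a b \in S) -> is_subloop mul e S.
Proof.
move=> eS HS; split => //; split => //; split.
  by move=> a x aS; apply: div_closed => s sS; apply: HS.
move=> a y aS; rewrite mulC; apply: div_closed => s sS; exact: HS.
Qed.
End Loop.

Lemma search_ok : solve 100 P0 = true.
Proof. vm_cast_no_check (erefl true). Qed.

Unset Implicit Arguments.
Theorem lemma3p8 (T : finType) (mul : T -> T -> T) (e : T) :
  #|T| = 9 ->
  is_jordan_loop mul e ->
  (exists x : T, generates mul e x) ->
  is_group_op mul.
Proof.
move=> card9 hJ [x gen].
have m1 := mul1 hJ; have m0 := mul0 hJ; have mC := mulC hJ; have mI := mulI hJ.
set p2 := mul x x; set p3 := mul x p2.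
have p22 : mul p2 p2 = mul x p3.
  by rewrite /p2 (mulJ hJ x x) -/p2 (mC p2 x) -/p3 mC.
case: (boolP (p3 \in [:: e; x; p2])) => H3.
  exfalso.
  pose S := [set z | z \in [:: e; x; p2]].
  have SE z : (z \in S) = [|| z == e, z == x | z == p2] by rewrite /S !inE.
  have p3S : p3 \in S by rewrite SE; move: H3; rewrite !inE.
  have p4S : mul x p3 \in S.
    move: H3; rewrite !inE => /or3P[] /eqP ->.
    - by rewrite m0 eqxx orbT.
    - by rewrite -/p2 eqxx !orbT.
    - by rewrite -SE.
  have sub : is_subloop mul e S.
    apply: (subloop_of hJ); first by rewrite SE eqxx.
    move=> a b; rewrite !SE => /or3P[] /eqP -> /or3P[] /eqP ->;
      rewrite ?m1 ?m0 ?SE ?eqxx ?orbT //.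
    all: try by rewrite -/p2 eqxx !orbT.
    - by rewrite -SE.
    - by rewrite mC -SE.
    - by rewrite p22 -SE.
  have ST : S = setT by apply/setP => z; rewrite in_setT; apply: (gen z S sub); rewrite SE eqxx orbT.
  have : #|S| <= 3.
    have -> : #|S| = #|[:: e; x; p2]| by apply: eq_card => z; rewrite SE !inE.
    exact: card_size.
  by rewrite ST cardsT card9.
move: H3; rewrite !inE !negb_or => /and3P[p3e p3x p3p2].
have xe : x != e.
  apply/eqP=> xE; move: p3e; rewrite /p3 /p2 xE !m1 eqxx //.
have p2e : p2 != e.
  apply/eqP=> pE; move: p3x; rewrite /p3 pE m0 eqxx //.
have p2x : p2 != x.
  apply/eqP=> pE; move: xe; rewrite -{1}(m0 x) /p2 in pE.
  by rewrite (mI _ _ _ pE) eqxx.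
set l := [:: e; x; p2; p3].
have ul : uniq l.
  rewrite /l /= !inE !negb_or eq_sym xe eq_sym p2e eq_sym p3e eq_sym p2x eq_sym p3x eq_sym p3p2.
  by [].
set s := l ++ [seq z <- enum T | z \notin l].
have us : uniq s.
  rewrite cat_uniq ul filter_uniq ?enum_uniq // andbT.
  by apply/hasPn => z; rewrite mem_filter => /andP[].
have alls : forall z, z \in s by move=> z; rewrite mem_cat mem_filter mem_enum andbT orbN.
have sz : size s = 9.
  rewrite -(card_uniqP us) -card9; apply: eq_card => z; by rewrite alls.
pose f i := nth e s i.
pose g z := index z s.
have fg z : f (g z) = z by rewrite /f /g nth_index.
have g9 z : g z < 9 by rewrite /g -sz index_mem.
have gf i : i < 9 -> g (f i) = i by move=> i9; rewrite /f /g index_uniq // sz.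
pose t a b := g (mul (f a) (f b)).
have tv : valid t.
  split.
  - by move=> a b _ _; apply: g9.
  - by move=> a b _ _; rewrite /t mC.
  - move=> a b c _ b9 c9 E.
    have := congr1 f E; rewrite !fg => /mI E2.
    by rewrite -(gf b b9) -(gf c c9) E2.
  - by move=> a y _ _; rewrite /t !fg (mulJ hJ).
have f0 : f 0 = e by [].
have f1 : f 1 = x by [].
have f2 : f 2 = p2 by [].
have f3 : f 3 = p3 by [].
have h0 : forall j, j < 9 -> t 0 j = j by move=> j j9; rewrite /t f0 m1 gf.
have h11 : t 1 1 = 2 by rewrite /t f1 (_ : mul x x = f 2) // gf.
have h12 : t 1 2 = 3 by rewrite /t f1 f2 (_ : mul x p2 = f 3) // gf.
have hA := solve_sound tv (agrees_P0 tv h0 h11 h12) search_ok.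
move=> u v w.
have := hA (g u) (g v) (g w) (g9 u) (g9 v) (g9 w).
rewrite /t !fg => E.
by have := congr1 f E; rewrite !fg.
Qed.
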